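(* Let $k,d\in\mathbb{N}$ and $m,n\in\{1,\dots,d\}$. Define $\Delta_{m,n}:\mathbb{R}^{d\times d}\to\mathbb{R}^{d\times d}$ by $[\Delta_{m,n}(X)]_{m',n'}=[X]_{m,n}$ if $(m',n')=(m,n)$ and $0$ otherwise. Then there exist $r\in\mathbb N$ with $r\leq \frac{5}{2}d-1$ and kernels $K^1,\dots,K^r\in\mathbb{R}^{(2k+1)\times(2k+1)}$ (depending on $m,n$) such that for all $X\in[0,1]^{d\times d}$, $$\Delta_{m,n}(X)=K^r*(\cdots*(K^2*(K^1*X))\cdots).$$
   Context: Single-channel zero-padding convolution: for $K\in\mathbb R^{(2k+1)\times(2k+1)}$ with entries $[K]_{s,t}$, $s,t\in\{-k,\dots,k\}$, and $X\in\mathbb R^{d\times d}$, $[K*X]_{m,n}=\sum_{s,t=-k}^k[K]_{s,t}[\iota(X)]_{m+s,n+t}$ for $m,n\in\{1,\dots,d\}$, where $[\iota(X)]_{a,b}=[X]_{a,b}$ if $a,b\in\{1,\dots,d\}$ and $0$ for other $a,b\in\mathbb Z$. *)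

(* Defs.v *)
From mathcomp Require Import all_boot all_order all_algebra.
From mathcomp Require Import reals.
Set Implicit Arguments. Unset Strict Implicit. Unset Printing Implicit Defensive.
Import Order.TTheory GRing.Theory Num.Theory.
Local Open Scope ring_scope.

(* Indices are 0-based: 'I_d = {0,...,d-1} stands for {1,...,d}.
   Kernel index s in 'I_(2k+1) stands for s - k in {-k,...,k}. *)

Definition pad (R : realType) (d : nat) (X : 'M[R]_d) (a b : int) : R :=
  if (0 <= a) && (0 <= b) then
    match (insub `|a|%N : option 'I_d), (insub `|b|%N : option 'I_d) with
    | Some i, Some j => X i j
    | _, _ => 0
    end
  else 0.

Definition conv (R : realType) (k d : nat) (K : 'M[R]_(k.*2.+1)) (X : 'M[R]_d)
  : 'M[R]_d :=
  \matrix_(i < d, j < d)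
    \sum_(s < k.*2.+1) \sum_(t < k.*2.+1)
      K s t * pad X (i%:Z + s%:Z - k%:Z) (j%:Z + t%:Z - k%:Z).

Definition conv_chain (R : realType) (k d : nat) (Ks : seq 'M[R]_(k.*2.+1))
  (X : 'M[R]_d) : 'M[R]_d :=
  foldl (fun Y K => conv K Y) X Ks.

Definition Delta (R : realType) (d : nat) (m n : 'I_d) (X : 'M[R]_d) : 'M[R]_d :=
  \matrix_(i < d, j < d) if (i == m) && (j == n) then X m n else 0.

(* Main.v *)
Require Import Defs.
From mathcomp Require Import all_boot all_order all_algebra.
From mathcomp Require Import reals.
From mathcomp Require Import zify.
From Stdlib Require Import FunctionalExtensionality.
Import Order.TTheory GRing.Theory Num.Theory.
Local Open Scope ring_scope.

Definition inb (d : nat) (a : int) : bool := (0 <= a) && (a < d%:Z).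
Definition sgn (u : bool) : int := if u then 1 else -1.
Definition rstep (R : realType) (d : nat) (u : bool) (f : int -> int -> R) :=
  fun a b => if inb d a then f (a + sgn u) b else 0.
Definition cstep (R : realType) (d : nat) (u : bool) (f : int -> int -> R) :=
  fun a b => if inb d b then f a (b + sgn u) else 0.
Definition kidx (k : nat) (u : bool) : nat := if u then k.+1 else k.-1.
Definition kern (R : realType) (k : nat) (p : bool * bool) : 'M[R]_(k.*2.+1) :=
  \matrix_(s, t) if (s == inord (kidx k p.1)) && (t == inord (kidx k p.2))
                 then 1 else 0.

Lemma pad_in (R : realType) d (X : 'M[R]_d) (i j : 'I_d) :
  pad X i j = X i j.
Proof.
by rewrite /pad /= !valK.
Qed.

Lemma pad_out (R : realType) d (X : 'M[R]_d) a b :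
  ~~ (inb d a && inb d b) -> pad X a b = 0.
Proof.
rewrite /pad /inb; case: a => [a|a]; case: b => [b|b] //=.
rewrite !ltz_nat /= => H.
case: (ltnP a d) => Ha; last by rewrite insubF // ltnNge Ha.
rewrite insubT.
have Hb : (b < d)%N = false by move: H; rewrite Ha /= ltnNge negbK => ->.
by rewrite insubF.
Qed.

Lemma inb_ord d a : inb d a -> exists i : 'I_d, a = i%:Z.
Proof.
rewrite /inb; case: a => [a|a] //=; rewrite ltz_nat => H.
by exists (Ordinal H).
Qed.

Lemma kidxE k u : (1 <= k)%N -> (kidx k u < k.*2.+1)%N /\
   (kidx k u)%:Z - k%:Z = sgn u.
Proof. move=> hk; case: u => /=; split; lia. Qed.

Lemma pad_conv (R : realType) k d (hk : (1 <= k)%N) (X : 'M[R]_d) p :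
  pad (conv (kern R k p) X) = rstep R d p.1 (cstep R d p.2 (pad X)).
Proof.
apply: functional_extensionality => a; apply: functional_extensionality => b.
rewrite /rstep /cstep.
case Ha: (inb d a); case Hb: (inb d b); try (by rewrite pad_out // Ha ?Hb).
have [i ->] := inb_ord _ _ Ha; have [j ->] := inb_ord _ _ Hb.
rewrite pad_in mxE.
have [h1 e1] := kidxE _ p.1 hk; have [h2 e2] := kidxE _ p.2 hk.
set s0 : 'I_(k.*2.+1) := inord (kidx k p.1).
set t0 : 'I_(k.*2.+1) := inord (kidx k p.2).
rewrite (bigD1 s0) //= (bigD1 t0) //= mxE !eqxx mul1r.
rewrite big1 ?addr0; last by move=> t /negbTE Ht; rewrite mxE Ht andbF mul0r.
rewrite big1 ?addr0; last first.
  move=> s /negbTE Hs; rewrite big1 // => t _; by rewrite mxE Hs mul0r.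
rewrite !inordK //; congr pad; lia.
Qed.

Definition F2 (R : realType) d (f : int -> int -> R) (p : bool * bool) :=
  rstep R d p.1 (cstep R d p.2 f).
Definition FR (R : realType) d (f : int -> int -> R) u := rstep R d u f.
Definition FC (R : realType) d (f : int -> int -> R) u := cstep R d u f.

Lemma chain_pad (R : realType) k d (hk : (1 <= k)%N) L (X : 'M[R]_d) :
  pad (conv_chain (map (kern R k) L) X) = foldl (F2 R d) (pad X) L.
Proof.
elim: L X => [|p L IH] X //=.
by rewrite IH /F2 (pad_conv _ _ _ hk).
Qed.

Lemma rc_comm (R : realType) d u v (f : int -> int -> R) :
  rstep R d u (cstep R d v f) = cstep R d v (rstep R d u f).
Proof.
apply: functional_extensionality => a; apply: functional_extensionality => b.
by rewrite /rstep /cstep; case: (inb d a); case: (inb d b).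
Qed.

Lemma foldC_r (R : realType) d u cs (f : int -> int -> R) :
  foldl (FC R d) (rstep R d u f) cs = rstep R d u (foldl (FC R d) f cs).
Proof.
elim: cs f => [|c cs IH] f //=.
by rewrite /FC -rc_comm -IH.
Qed.

Lemma fold_zip (R : realType) d rs cs (f : int -> int -> R) :
  size rs = size cs ->
  foldl (F2 R d) f (zip rs cs) = foldl (FR R d) (foldl (FC R d) f cs) rs.
Proof.
elim: rs cs f => [|r rs IH] [|c cs] f //= [] Hs.
rewrite IH // /F2 /FR; congr foldl.
by rewrite -foldC_r.
Qed.

Definition rvan (R : realType) d (f : int -> int -> R) :=
  forall a b, ~~ inb d a -> f a b = 0.
Definition cvan (R : realType) d (f : int -> int -> R) :=
  forall a b, ~~ inb d b -> f a b = 0.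

Lemma rvan_fold (R : realType) d f rs cs :
  rvan R d f -> rvan R d (foldl (FR R d) (foldl (FC R d) f cs) rs).
Proof.
move=> H.
have Hc : rvan R d (foldl (FC R d) f cs).
  elim: cs f H => [|c cs IH] f H //=; apply: IH.
  by move=> a b Ha; rewrite /FC /cstep H //; case: ifP.
elim: rs (foldl _ _ _) Hc => [|r rs IH] g Hg //=; apply: IH.
by move=> a b Ha; rewrite /FR /rstep (negbTE Ha).
Qed.

Lemma cvan_fold (R : realType) d f cs :
  cvan R d f -> cvan R d (foldl (FC R d) f cs).
Proof.
elim: cs f => [|c cs IH] f H //=; apply: IH.
by move=> a b Ha; rewrite /FC /cstep (negbTE Ha).
Qed.

Lemma Rplus (R : realType) d j (g : int -> int -> R) : rvan R d g ->
  forall a b, foldl (FR R d) g (nseq j true) a b =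
              if 0 <= a then g (a + j%:Z) b else 0.
Proof.
elim: j g => [|j IH] g Hg a b /=.
  by rewrite addr0; case: ifP => // Ha; rewrite Hg // /inb Ha.
rewrite IH; last by move=> x y Hx; rewrite /FR /rstep (negbTE Hx).
rewrite /FR /rstep /sgn; case: ifP => // Ha.
case: ifP => Hi; first by congr g; lia.
rewrite Hg //; move: Hi; rewrite /inb; lia.
Qed.

Lemma Rminus (R : realType) d j (g : int -> int -> R) : rvan R d g ->
  forall a b, foldl (FR R d) g (nseq j false) a b =
              if a < d%:Z then g (a - j%:Z) b else 0.
Proof.
elim: j g => [|j IH] g Hg a b /=.
  by rewrite subr0; case: ifP => // Ha; rewrite Hg // /inb Ha andbF.
rewrite IH; last by move=> x y Hx; rewrite /FR /rstep (negbTE Hx).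
rewrite /FR /rstep /sgn; case: ifP => // Ha.
case: ifP => Hi; first by congr g; lia.
rewrite Hg //; move: Hi; rewrite /inb; lia.
Qed.

Lemma Cplus (R : realType) d j (g : int -> int -> R) : cvan R d g ->
  forall a b, foldl (FC R d) g (nseq j true) a b =
              if 0 <= b then g a (b + j%:Z) else 0.
Proof.
elim: j g => [|j IH] g Hg a b /=.
  by rewrite addr0; case: ifP => // Ha; rewrite Hg // /inb Ha.
rewrite IH; last by move=> x y Hx; rewrite /FC /cstep (negbTE Hx).
rewrite /FC /cstep /sgn; case: ifP => // Ha.
case: ifP => Hi; first by congr g; lia.
rewrite Hg //; move: Hi; rewrite /inb; lia.
Qed.

Lemma Cminus (R : realType) d j (g : int -> int -> R) : cvan R d g ->
  forall a b, foldl (FC R d) g (nseq j false) a b =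
              if b < d%:Z then g a (b - j%:Z) else 0.
Proof.
elim: j g => [|j IH] g Hg a b /=.
  by rewrite subr0; case: ifP => // Ha; rewrite Hg // /inb Ha andbF.
rewrite IH; last by move=> x y Hx; rewrite /FC /cstep (negbTE Hx).
rewrite /FC /cstep /sgn; case: ifP => // Ha.
case: ifP => Hi; first by congr g; lia.
rewrite Hg //; move: Hi; rewrite /inb; lia.
Qed.

Definition walk (d m : nat) : seq bool :=
  nseq m true ++ nseq d.-1 false ++ nseq (d.-1 - m) true.

Lemma size_walk d m : (m < d)%N -> size (walk d m) = (d.-1).*2.
Proof. move=> H; rewrite /walk !size_cat !size_nseq; lia. Qed.

Lemma rows_res (R : realType) d m (g : int -> int -> R) : (m < d)%N ->
  rvan R d g -> forall a b,
  foldl (FR R d) g (walk d m) a b = if a == m%:Z then g a b else 0.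
Proof.
move=> Hm Hg a b.
have V : forall rs (h : int -> int -> R), rvan R d h -> rvan R d (foldl (FR R d) h rs).
  by move=> rs h Hh; apply: (rvan_fold _ _ _ rs [::] Hh).
rewrite /walk !foldl_cat.
rewrite (Rplus _ _ (d.-1 - m) _ (V (nseq d.-1 false) _ (V (nseq m true) _ Hg))) (Rminus _ _ d.-1 _ (V (nseq m true) _ Hg)) (Rplus _ _ m _ Hg).
case: eqP => [->|H].
  repeat (rewrite ifT; last lia).
  congr g; lia.
by repeat case: ifP => ?; try lia.
Qed.

Lemma cols_res (R : realType) d n (g : int -> int -> R) : (n < d)%N ->
  cvan R d g -> forall a b,
  foldl (FC R d) g (walk d n) a b = if b == n%:Z then g a b else 0.
Proof.
move=> Hm Hg a b.
have V : forall rs (h : int -> int -> R), cvan R d h -> cvan R d (foldl (FC R d) h rs).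
  by move=> rs h Hh; apply: (cvan_fold _ _ _ rs Hh).
rewrite /walk !foldl_cat.
rewrite (Cplus _ _ (d.-1 - n) _ (V (nseq d.-1 false) _ (V (nseq n true) _ Hg))) (Cminus _ _ d.-1 _ (V (nseq n true) _ Hg)) (Cplus _ _ n _ Hg).
case: eqP => [->|H].
  repeat (rewrite ifT; last lia).
  congr g; lia.
by repeat case: ifP => ?; try lia.
Qed.

Theorem lemmaC1 (R : realType) (k d : nat) (hk : (1 <= k)%N)
  (m n : 'I_d) :
  exists Ks : seq 'M[R]_(k.*2.+1),
    (2 * size Ks <= 5 * d - 2)%N /\
    forall X : 'M[R]_d,
      (forall i j, 0 <= X i j <= 1) ->
      Delta m n X = conv_chain Ks X.
Proof.
have Hm := ltn_ord m; have Hn := ltn_ord n.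
exists (map (kern R k) (zip (walk d m) (walk d n))).
rewrite size_map size_zip !size_walk // minnn; split; first lia.
move=> X _; apply/matrixP => i j.
rewrite -[RHS]pad_in chain_pad // (fold_zip R d (walk d m) (walk d n) (pad X)) ?size_walk //.
have Vr : rvan R d (pad X) by move=> a b Ha; rewrite pad_out // (negbTE Ha).
have Vc : cvan R d (pad X) by move=> a b Hb; rewrite pad_out // (negbTE Hb) andbF.
rewrite rows_res //; last by apply: (rvan_fold _ _ _ [::]).
rewrite cols_res // !eqz_nat mxE pad_in.
case: (eqVneq i m) => [->|H1]; case: (eqVneq j n) => [->|H2]; rewrite ?eqxx //=.
all: by rewrite ifF //; apply/negbTE.
Qed.
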